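(* Let $A$ be a finitely Jacobson ring and $a\in A$. Let $B$ be a good $A$-algebra such that $B_a=B[1/a]$ is integral over $A_a=A[1/a]$. Then $a\cdot \mathrm{Jac}_B J\subseteq \mathrm{Nil}_B J$ for every finitely generated ideal $J$ of $B$.
   Context: All rings are commutative with identity. The setting is constructive mathematics: no law of excluded middle and no Zorn's lemma. For a ring $A$ and a subset $U\subseteq A$, $\langle U\rangle_A$ denotes the ideal generated by $U$. Define $\mathrm{Nil}_A U:=\{a\in A:\exists n\ge 0,\ a^n\in\langle U\rangle_A\}$ and $\mathrm{Jac}_A U:=\{a\in A:\forall b\in A,\ 1\in\langle U\cup\{1-ab\}\rangle_A\}$. A ring $A$ is called finitely Jacobson if every finitely generated ideal $I$ of $A$ satisfies $\mathrm{Jac}_A I\subseteq \mathrm{Nil}_A I$. An $A$-algebra $(B,\varphi:A\to B)$ is called good if for every finitely generated ideal $J$ of $B$, the ideal $\varphi^{-1}(J)\subseteq A$ is finitely generated. *)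

(* Defs.v *)
From HB Require Import structures.
From mathcomp Require Import all_boot all_order all_algebra.
Set Implicit Arguments. Unset Strict Implicit. Unset Printing Implicit Defensive.
Import GRing.Theory.
Local Open Scope ring_scope.

Definition in_ideal (R : comPzRingType) (U : R -> Prop) (x : R) : Prop :=
  exists (n : nat) (g : 'I_n -> R) (c : 'I_n -> R),
    (forall i, U (g i)) /\ x = \sum_(i < n) c i * g i.

Definition fin_gen_ideal (R : comPzRingType) (I : R -> Prop) : Prop :=
  exists (n : nat) (g : 'I_n -> R),
    forall x, I x <-> in_ideal (fun y => exists i, y = g i) x.

Definition NilR (R : comPzRingType) (U : R -> Prop) (x : R) : Prop :=
  exists n : nat, in_ideal U (x ^+ n).

Definition JacR (R : comPzRingType) (U : R -> Prop) (x : R) : Prop :=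
  forall b : R, in_ideal (fun y => U y \/ y = 1 - x * b) 1.

Definition finitely_Jacobson (R : comPzRingType) : Prop :=
  forall I : R -> Prop, fin_gen_ideal I -> forall x, JacR I x -> NilR I x.

Definition good (A B : comPzRingType) (phi : {rmorphism A -> B}) : Prop :=
  forall J : B -> Prop, fin_gen_ideal J -> fin_gen_ideal (fun x => J (phi x)).

(* Localization R[1/s]: an element is represented by a pair (r, k), meaning
   r / s^k; two representatives are equal in R[1/s] iff
   s^e (r * s^l - r' * s^k) = 0 for some e. *)
Section Loc.
Variables (R : comPzRingType) (s : R).
Definition loc_eq (x y : R * nat) : Prop :=
  exists e : nat, s ^+ e * (x.1 * s ^+ y.2 - y.1 * s ^+ x.2) = 0.
Definition loc_add (x y : R * nat) : R * nat :=
  (x.1 * s ^+ y.2 + y.1 * s ^+ x.2, (x.2 + y.2)%N).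
Definition loc_mul (x y : R * nat) : R * nat := (x.1 * y.1, (x.2 + y.2)%N).
Definition loc_zero : R * nat := (0, 0%N).
Definition loc_one : R * nat := (1, 0%N).
Definition loc_exp (x : R * nat) (n : nat) : R * nat := iter n (loc_mul x) loc_one.
End Loc.

(* B[1/phi a] is integral over A[1/a]: every element y of B[1/phi a] is a root
   of a monic polynomial  X^n + sum_{i<n} c_i X^i  whose coefficients c_i are
   images of elements of A[1/a] under the induced map A[1/a] -> B[1/phi a],
   (alpha, k) |-> (phi alpha, k). *)
Definition loc_integral (A B : comPzRingType) (phi : {rmorphism A -> B}) (a : A)
  : Prop :=
  let s := phi a in
  forall y : B * nat, exists (n : nat) (c : 'I_n -> A * nat),
    loc_eq s
      (loc_add s (loc_exp y n)
         (\big[loc_add s/@loc_zero B]_(i < n)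
             loc_mul (phi (c i).1, (c i).2) (loc_exp y i)))
      (@loc_zero B).

(* Main.v *)
Require Import Defs.
From HB Require Import structures.
From mathcomp Require Import all_boot all_order all_algebra.
From mathcomp Require Import ring.
Set Implicit Arguments. Unset Strict Implicit. Unset Printing Implicit Defensive.
Import GRing.Theory.
Local Open Scope ring_scope.

Section Ideals.
Variable R : comPzRingType.
Implicit Types (J K : R -> Prop) (U : R -> Prop).


Definition ideal J :=
  [/\ J 0, (forall x y, J x -> J y -> J (x + y)) & (forall r x, J x -> J (r * x))].

Lemma idealD J x y : ideal J -> J x -> J y -> J (x + y).
Proof. by case=> _ H _; apply: H. Qed.
Lemma idealM J r x : ideal J -> J x -> J (r * x).
Proof. by case=> _ _ H; apply: H. Qed.
Lemma idealMr J r x : ideal J -> J x -> J (x * r).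
Proof. by move=> HJ Hx; rewrite mulrC; apply: idealM. Qed.
Lemma ideal0 J : ideal J -> J 0.
Proof. by case. Qed.
Lemma idealN J x : ideal J -> J x -> J (- x).
Proof. by move=> HJ Hx; rewrite -mulN1r; apply: idealM. Qed.
Lemma idealB J x y : ideal J -> J x -> J y -> J (x - y).
Proof. by move=> HJ Hx Hy; apply: idealD => //; apply: idealN. Qed.
Lemma ideal_sum J n (F : 'I_n -> R) :
  ideal J -> (forall i, J (F i)) -> J (\sum_(i < n) F i).
Proof.
move=> HJ HF; apply: (big_ind J); [exact: ideal0 | | by move=> i _].
by move=> x y; apply: idealD.
Qed.
Lemma ideal_eq J x y : J x -> x = y -> J y.
Proof. by move=> H <-. Qed.

Lemma in_ideal_ideal U : ideal (in_ideal U).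
Proof.
split.
- exists 0%N, (fun _ => 0), (fun _ => 0); split; first by case.
  by rewrite big_ord0.
- move=> x y [n1 [g1 [c1 [Hg1 ->]]]] [n2 [g2 [c2 [Hg2 ->]]]].
  exists (n1 + n2)%N, (fun i => match split i with inl j => g1 j | inr j => g2 j end),
    (fun i => match split i with inl j => c1 j | inr j => c2 j end); split.
    by move=> i; case: (split i).
  rewrite big_split_ord /=; congr (_ + _); apply: eq_bigr => i _.
    by rewrite (unsplitK (inl _ : 'I_n1 + 'I_n2)).
  by rewrite (unsplitK (inr _ : 'I_n1 + 'I_n2)).
- move=> r x [n [g [c [Hg ->]]]]; exists n, g, (fun i => r * c i); split => //.
  by rewrite mulr_sumr; apply: eq_bigr => i _; rewrite mulrA.
Qed.

Lemma in_ideal_gen U u : U u -> in_ideal U u.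
Proof.
move=> Hu; exists 1%N, (fun _ => u), (fun _ => 1); split => //.
by rewrite big_ord1 mul1r.
Qed.

Lemma in_ideal_min U K x : ideal K -> (forall u, U u -> K u) -> in_ideal U x -> K x.
Proof.
move=> HK HU [n [g [c [Hg ->]]]]; apply: ideal_sum => // i.
by apply: idealM => //; apply: HU.
Qed.

Lemma in_ideal_id J x : ideal J -> in_ideal J x <-> J x.
Proof. by move=> HJ; split; [apply: in_ideal_min | apply: in_ideal_gen]. Qed.

Lemma fg_ideal J : fin_gen_ideal J -> ideal J.
Proof.
move=> [n [g Hg]]; have [H0 HD HM] := in_ideal_ideal (fun y => exists i, y = g i).
split; first by apply/Hg.
- by move=> x y /Hg Hx /Hg Hy; apply/Hg; apply: HD.
- by move=> r x /Hg Hx; apply/Hg; apply: HM.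
Qed.

Definition addI J z := fun y => exists j d, J j /\ y = j + d * z.

Lemma addI_ideal J z : ideal J -> ideal (addI J z).
Proof.
move=> HJ; split.
- by exists 0, 0; split; [apply: ideal0 | rewrite mul0r addr0].
- move=> x y [j1 [d1 [H1 ->]]] [j2 [d2 [H2 ->]]]; exists (j1 + j2), (d1 + d2).
  by split; [apply: idealD | ring].
- move=> r x [j [d [H ->]]]; exists (r * j), (r * d).
  by split; [apply: idealM | ring].
Qed.

Lemma addI_l J z x : ideal J -> J x -> addI J z x.
Proof. by move=> HJ Hx; exists x, 0; rewrite mul0r addr0. Qed.
Lemma addI_r J z : ideal J -> addI J z z.
Proof. by move=> HJ; exists 0, 1; split; [apply: ideal0 | rewrite add0r mul1r]. Qed.

Lemma in_ideal_addI J z w : ideal J ->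
  in_ideal (fun y => J y \/ y = z) w <-> addI J z w.
Proof.
move=> HJ; split.
  apply: in_ideal_min; first exact: addI_ideal.
  by move=> u [Hu| ->]; [apply: addI_l | apply: addI_r].
move=> [j [d [Hj ->]]]; apply: idealD; first exact: in_ideal_ideal.
  by apply: in_ideal_gen; left.
by apply: idealM; [apply: in_ideal_ideal | apply: in_ideal_gen; right].
Qed.

Lemma fg_addI J z : fin_gen_ideal J -> fin_gen_ideal (addI J z).
Proof.
move=> HJg; have HJ := fg_ideal HJg; case: HJg => n [g Hg].
pose g' (i : 'I_n.+1) := match unlift ord0 i with Some j => g j | None => z end.
exists n.+1, g' => x; split.
  move=> [j [d [Hj ->]]]; apply: idealD; first exact: in_ideal_ideal.
    move/Hg: Hj; apply: in_ideal_min; first exact: in_ideal_ideal.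
    move=> u [i ->]; apply: in_ideal_gen; exists (lift ord0 i).
    by rewrite /g' liftK.
  apply: idealM; first exact: in_ideal_ideal.
  by apply: in_ideal_gen; exists ord0; rewrite /g' unlift_none.
apply: in_ideal_min; first exact: addI_ideal.
move=> u [i ->]; rewrite /g'; case: (unlift ord0 i) => [j|]; last exact: addI_r.
by apply: addI_l => //; apply/Hg; apply: in_ideal_gen; exists j.
Qed.

Lemma addI_mono J z x : ideal J -> JacR J x -> JacR (addI J z) x.
Proof.
move=> HJ Hx b; have HJ' := addI_ideal z HJ.
apply/(in_ideal_addI _ _ HJ'); have /(in_ideal_addI _ _ HJ) [j [d [Hj E]]] := Hx b.
by exists j, d; split => //; apply: addI_l.
Qed.

Lemma ideal_expD J y p m : ideal J -> J p -> J ((y + p) ^+ m - y ^+ m).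
Proof.
move=> HJ Hp; rewrite subrXX; apply: idealMr => //.
by rewrite addrAC subrr add0r.
Qed.

End Ideals.

Lemma loc_big_num (B : comPzRingType) (s : B) n (F : 'I_n -> B * nat) :
  exists d : nat -> nat,
    (\big[loc_add s/@loc_zero B]_(i < n) F i).1 = \sum_(i < n) (F i).1 * s ^+ d i.
Proof.
elim: n F => [|n IH] F.
  by exists (fun _ => 0%N); rewrite !big_ord0.
have [d Hd] := IH (fun i => F (lift ord0 i)).
set rest := \big[_/_]_(i < n) _ in Hd.
exists (fun j => if j is j'.+1 then (d j' + (F ord0).2)%N else rest.2).
rewrite big_ord_recl big_ord_recl -/rest /loc_add /= Hd mulr_suml; congr (_ + _).
by apply: eq_bigr => i _; rewrite exprD mulrA add0n.
Qed.

Lemma loc_exp0 (B : comPzRingType) (v : B) i :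
  loc_exp (v, 0%N) i = (v ^+ i, 0%N).
Proof.
elim: i => [|i IH] //=; rewrite /loc_exp /= in IH *; rewrite IH /loc_mul /=.
by rewrite exprS.
Qed.

Lemma integral_rel (A B : comPzRingType) (phi : {rmorphism A -> B}) a v :
  loc_integral phi a ->
  exists n E (g : 'I_n -> A),
    phi a ^+ E * v ^+ n + \sum_(i < n) phi (g i) * v ^+ i = 0.
Proof.
move=> Hint; have [n [c [e He]]] := Hint (v, 0%N).
have [d Hd] := loc_big_num (phi a) (fun i : 'I_n => loc_mul (phi (c i).1, (c i).2) (loc_exp (v, 0%N) i)).
set K := (\big[loc_add (phi a)/loc_zero B]_(i < n) loc_mul (phi (c i).1, (c i).2) (loc_exp (v, 0%N) i)).2.
have E1 : forall (x y : B * nat), (loc_add (phi a) x y).1 = x.1 * phi a ^+ y.2 + y.1 * phi a ^+ x.2 by [].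
move: He; rewrite E1 Hd loc_exp0 -/K.
rewrite [(loc_zero B).1]/= [(loc_zero B).2]/= [(v ^+ n, 0%N).2]/= [(v ^+ n, 0%N).1]/=.
rewrite expr0 !mulr1 mul0r subr0 => He.
exists n, (e + K)%N, (fun i => a ^+ e * (c i).1 * a ^+ d i).
rewrite -[X in _ = X]He mulrDr mulr_sumr exprD; congr (_ + _); first by ring.
apply: eq_bigr => i _; rewrite /= loc_exp0 /= !rmorphM !rmorphXn; ring.
Qed.

Lemma preim_ideal (A B : comPzRingType) (phi : {rmorphism A -> B}) J :
  ideal J -> ideal (fun y => J (phi y)).
Proof.
move=> HJ; split.
- by rewrite rmorph0; apply: ideal0.
- by move=> x y Hx Hy; rewrite rmorphD; apply: idealD.
- by move=> r x Hx; rewrite rmorphM; apply: idealM.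
Qed.

Lemma lying (A B : comPzRingType) (phi : {rmorphism A -> B}) (a : A)
   (J : B -> Prop) t j v :
  loc_integral phi a -> ideal J -> J j -> 1 = j + phi t * v ->
  exists N i s, J (phi i) /\ a ^+ N = i + t * s.
Proof.
move=> Hint HJ Hj E1.
have [n [E [g Hrel]]] := integral_rel v Hint.
set w := phi t; set q := w * v.
have Hq : forall k, J (q ^+ k - 1).
  move=> k; have -> : q = 1 + - j by rewrite /q [1]E1; ring.
  by rewrite -{2}(expr1n _ k); apply: ideal_expD => //; apply: idealN.
set s0 := \sum_(i < n) g i * t ^+ (n - i.+1).
exists E, (a ^+ E + t * s0), (- s0); split; last by ring.
have E2 : phi (a ^+ E + t * s0) = phi a ^+ E + \sum_(i < n) phi (g i) * w ^+ (n - i).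
  rewrite rmorphD rmorphM rmorphXn rmorph_sum mulr_sumr; congr (_ + _).
  apply: eq_bigr => i _; rewrite rmorphM rmorphXn -(subnSK (ltn_ord i)).
  by rewrite exprS /w; ring.
have E3 : w ^+ n * (phi a ^+ E * v ^+ n + \sum_(i < n) phi (g i) * v ^+ i) =
   phi a ^+ E * q ^+ n + \sum_(i < n) phi (g i) * w ^+ (n - i) * q ^+ i.
  rewrite mulrDr mulr_sumr /q exprMn; congr (_ + _); first by ring.
  apply: eq_bigr => i _; rewrite exprMn.
  rewrite -{1}(subnK (ltnW (ltn_ord i))) exprD; ring.
rewrite Hrel mulr0 in E3.
have -> : phi (a ^+ E + t * s0) =
   (phi a ^+ E * q ^+ n + \sum_(i < n) phi (g i) * w ^+ (n - i) * q ^+ i)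
   - (phi a ^+ E * (q ^+ n - 1) + \sum_(i < n) phi (g i) * w ^+ (n - i) * (q ^+ i - 1)).
  rewrite E2.
  have -> : \sum_(i < n) phi (g i) * w ^+ (n - i) * q ^+ i =
     \sum_(i < n) phi (g i) * w ^+ (n - i) * (q ^+ i - 1) +
     \sum_(i < n) phi (g i) * w ^+ (n - i).
    rewrite -big_split /=; apply: eq_bigr => i _; ring.
  ring.
rewrite -E3 add0r.
apply: idealN => //; apply: idealD => //; first by apply: idealM.
by apply: ideal_sum => // i; apply: idealM.
Qed.

Lemma main_ind (A B : comPzRingType) (phi : {rmorphism A -> B}) (a : A) :
  finitely_Jacobson A -> good phi -> loc_integral phi a ->
  forall n J, fin_gen_ideal J -> forall x E (g : 'I_n -> A), JacR J x ->
  J (phi a ^+ E * x ^+ n + \sum_(i < n) phi (g i) * x ^+ i) ->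
  exists m, J ((phi a * x) ^+ m).
Proof.
move=> HA Hgood Hint; elim=> [|n IH] J HJg x E g Hx HP; have HJ := fg_ideal HJg.
  exists E; rewrite big_ord0 expr0 mulr1 addr0 in HP.
  by rewrite exprMn; apply: idealMr.
rewrite big_ord_recl expr0 mulr1 in HP.
set c := g ord0 in HP.
set r := phi a ^+ E * x ^+ n + \sum_(i < n) phi (g (lift ord0 i)) * x ^+ i.
set P := x * r + phi c.
have HPJ : J P.
  apply: (ideal_eq HP); rewrite /P /r mulrDr mulr_sumr exprS.
  have -> : \sum_(i < n) phi (g (lift ord0 i)) * x ^+ lift ord0 i =
            \sum_(i < n) x * (phi (g (lift ord0 i)) * x ^+ i).
    by apply: eq_bigr => i _; rewrite lift0 exprS; ring.
  ring.
have HI := preim_ideal phi HJ.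
have Hjac : JacR (fun y => J (phi y)) (a * c).
  move=> b; apply/(in_ideal_addI _ _ HI).
  have /(in_ideal_addI _ _ HJ) [j0 [d [Hj0 E0]]] := Hx (- (r * phi (a * b))).
  have E1 : 1 = (j0 + d * P * phi (a * b)) + phi (1 - c * (a * b)) * d.
    by rewrite [LHS]E0 /P !rmorphM rmorphB rmorph1 rmorphM; ring.
  have [N [i [s [Hi Es]]]] := lying Hint HJ
    (idealD HJ Hj0 (idealMr _ HJ (idealM _ HJ HPJ))) E1.
    set z := a * c * b.
    set S := \sum_(k < N) z ^+ k.
    exists (i * (c * b) ^+ N), (s * (c * b) ^+ N + S); split.
      by rewrite rmorphM; apply: idealMr.
    have Hsub : (1 - z) * S = 1 - z ^+ N.
      by apply: oppr_inj; rewrite -mulNr opprB opprB subrX1.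
    have Hz : z ^+ N = a ^+ N * (c * b) ^+ N by rewrite /z -mulrA exprMn.
    apply: (@etrans _ _ (z ^+ N + (1 - z) * S)); first by rewrite Hsub; ring.
    rewrite Hz Es /z; ring.
have [m Hm] := HA _ (Hgood _ HJg) _ Hjac.
move/(in_ideal_id _ HI): Hm => Hm.
have Hxr : J ((phi a * x * r) ^+ m).
  have -> : phi a * x * r = phi a * (- phi c + P) by rewrite /P; ring.
  rewrite exprMn -(subrK ((- phi c) ^+ m) ((- phi c + P) ^+ m)) mulrDr.
  apply: idealD => //; first by apply: idealM => //; apply: ideal_expD.
  rewrite exprNn mulrCA; apply: idealM => //.
  by move: Hm; rewrite rmorphXn rmorphM exprMn.
have HJ2g := fg_addI r HJg.
have HJ2 := fg_ideal HJ2g.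
have [k [j [d [Hj Ek]]]] := IH _ HJ2g x E (fun i => g (lift ord0 i))
   (addI_mono r HJ Hx) (addI_r r HJ).
exists (k * m + m)%N.
rewrite exprD exprM Ek.
rewrite -(subrK ((d * r) ^+ m) ((j + d * r) ^+ m)) mulrDl.
apply: idealD => //.
  by apply: idealMr => //; rewrite (addrC j); exact: ideal_expD.
have -> : (d * r) ^+ m * (phi a * x) ^+ m = d ^+ m * (phi a * x * r) ^+ m.
  by rewrite !exprMn; ring.
exact: idealM.
Qed.

Theorem mainTheorem7 (A B : comPzRingType) (phi : {rmorphism A -> B}) (a : A) :
  finitely_Jacobson A ->
  good phi ->
  loc_integral phi a ->
  forall J : B -> Prop, fin_gen_ideal J ->
  forall x : B, JacR J x -> NilR J (phi a * x).
Proof.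
move=> HA Hgood Hint J HJg x Hx.
have [n [E [g Hrel]]] := integral_rel x Hint.
have HJ := fg_ideal HJg.
have [m Hm] := main_ind HA Hgood Hint HJg Hx (ideal_eq (ideal0 HJ) (esym Hrel)).
by exists m; apply/(in_ideal_id _ HJ).
Qed.
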